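(* Let $G=(V,E)$ be a connected undirected graph on $n$ nodes with Laplacian $L$, let $\kappa_1,\dots,\kappa_n>0$, and let $D_\kappa=\mathrm{diag}(\kappa_1,\dots,\kappa_n)$. For $S\subseteq V$ let $D_S$ be the diagonal $0/1$ matrix with $(D_S)_{ii}=1$ iff $i\in S$, and set $Q_S=L+D_\kappa D_S$ (write $Q_v$ for $Q_{\{v\}}$). Define $f:2^V\to\mathbb{R}$ by $f(\emptyset)=0$ and $f(S)=C-\mathrm{tr}(Q_S^{-1})$ for $S\neq\emptyset$, where $C=2\max_{v\in V}\mathrm{tr}(Q_v^{-1})$. Then $f$ is non-decreasing: for all $S_1\subseteq S_2\subseteq V$, $f(S_1)\le f(S_2)$.
   Context: For nonempty $S$, the matrix $Q_S$ is positive definite, so $Q_S^{-1}$ exists. A set function $f$ is non-decreasing if $A\subseteq B$ implies $f(A)\le f(B)$. *)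

(* Defs.v *)
From HB Require Import structures.
From mathcomp Require Import all_boot all_order all_algebra.
Set Implicit Arguments. Unset Strict Implicit. Unset Printing Implicit Defensive.
Import Order.TTheory GRing.Theory Num.Theory.
Local Open Scope ring_scope.

Section Defs.
Variables (R : realFieldType) (n : nat).

Definition simple_graph (adj : rel 'I_n) : Prop :=
  symmetric adj /\ irreflexive adj.

Definition connected_graph (adj : rel 'I_n) : Prop :=
  forall i j : 'I_n, connect adj i j.

Definition laplacian (adj : rel 'I_n) : 'M[R]_n :=
  \matrix_(i, j) (if i == j then (#|[set k | adj i k]|)%:R
                  else - (adj i j)%:R).

Definition indicator_mx (S : {set 'I_n}) : 'M[R]_n :=
  diag_mx (\row_i (i \in S)%:R).

Definition kappa_mx (kappa : 'I_n -> R) : 'M[R]_n := diag_mx (\row_i kappa i).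

Definition Qmx (adj : rel 'I_n) (kappa : 'I_n -> R) (S : {set 'I_n}) : 'M[R]_n :=
  laplacian adj + kappa_mx kappa *m indicator_mx S.

(* max_{v in V} tr(Q_v^{-1}); v0 is any vertex, used only as the seed of the fold. *)
Definition maxR : R -> R -> R := Num.max.

Definition max_trinv (adj : rel 'I_n) (kappa : 'I_n -> R) (v0 : 'I_n) : R :=
  \big[maxR/(\tr (invmx (Qmx adj kappa [set v0])))]_(v : 'I_n)
     \tr (invmx (Qmx adj kappa [set v])).

Definition fset_fun (adj : rel 'I_n) (kappa : 'I_n -> R) (v0 : 'I_n)
    (S : {set 'I_n}) : R :=
  if S == set0 then 0
  else 2 * max_trinv adj kappa v0 - \tr (invmx (Qmx adj kappa S)).

End Defs.

(* Main.v *)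
Require Import Defs.
From HB Require Import structures.
From mathcomp Require Import all_boot all_order all_algebra.
From mathcomp Require Import ring lra.
Set Implicit Arguments. Unset Strict Implicit. Unset Printing Implicit Defensive.
Import Order.TTheory GRing.Theory Num.Theory.
Local Open Scope ring_scope.

Lemma Qmx_entry (R : realFieldType) (n : nat) (adj : rel 'I_n) (kappa : 'I_n -> R) S i j :
  irreflexive adj ->
  Qmx adj kappa S i j = (i == j)%:R * (\sum_k (adj i k)%:R + (i \in S)%:R * kappa i) - (adj i j)%:R.
Proof.
move=> irr.
rewrite /Qmx /kappa_mx /indicator_mx /laplacian mul_diag_mx !mxE.
have -> : #|[set k | adj i k]|%:R = \sum_k (adj i k)%:R :> R.
  rewrite -sum1_card natr_sum big_mkcond /=; apply: eq_bigr => k _.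
  by rewrite inE; case: (adj i k).
case: eqP => [<-|ne]; first by rewrite irr mul1r subr0 mulr1n mulrC.
by rewrite mul0r sub0r mulr0n mulr0 addr0.
Qed.

Lemma qf_expand (R : realFieldType) (n : nat) (A : 'M[R]_n) (u : 'rV[R]_n) :
  (u *m A *m u^T) 0 0 = \sum_i \sum_j u 0 i * A i j * u 0 j.
Proof.
rewrite mxE.
under eq_bigr do rewrite !mxE big_distrl /=.
rewrite exchange_big /=; apply: eq_bigr => i _; apply: eq_bigr => j _.
by [].
Qed.


Lemma sum_delta (R : realFieldType) (n : nat) (i : 'I_n) (F : 'I_n -> R) :
  \sum_j (i == j)%:R * F j = F i.
Proof.
rewrite (bigD1 i) //= eqxx mul1r big1 ?addr0 // => j ji.
by rewrite eq_sym (negbTE ji) mul0r.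
Qed.
Lemma qf_Q (R : realFieldType) (n : nat) (adj : rel 'I_n) (kappa : 'I_n -> R) S (u : 'rV[R]_n) :
  symmetric adj -> irreflexive adj ->
  2 * (u *m Qmx adj kappa S *m u^T) 0 0 =
  \sum_i \sum_j (adj i j)%:R * (u 0 i - u 0 j) ^+ 2 + 2 * \sum_i (i \in S)%:R * kappa i * u 0 i ^+ 2.
Proof.
move=> sym irr.
set A := \sum_i \sum_j (adj i j)%:R * u 0 i ^+ 2.
set B := \sum_i \sum_j (adj i j)%:R * (u 0 i * u 0 j).
set K := \sum_i (i \in S)%:R * kappa i * u 0 i ^+ 2.
have e1 : (u *m Qmx adj kappa S *m u^T) 0 0 = A + K - B.
  rewrite qf_expand /A /K /B -big_split -sumrB /=; apply: eq_bigr => i _.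
  under eq_bigr do rewrite Qmx_entry //.
  under eq_bigr do rewrite mulrBr mulrBl.
  rewrite sumrB.
  set c := (_ + _ * kappa i).
  have -> : \sum_j u 0 i * ((i == j)%:R * c) * u 0 j = u 0 i * c * u 0 i.
    rewrite -(sum_delta i (fun j => u 0 i * c * u 0 j)); apply: eq_bigr => j _; ring.
  congr (_ - _); last by apply: eq_bigr => j _; ring.
  rewrite /c -mulr_suml; ring.
have e2 : \sum_i \sum_j (adj i j)%:R * (u 0 i - u 0 j) ^+ 2 = A + A - 2 * B.
  have -> : A + A - 2 * B = A + \sum_i \sum_j (adj i j)%:R * u 0 j ^+ 2 - 2 * B.
    congr (_ + _ - _); rewrite /A exchange_big /=; apply: eq_bigr => i _.
    by apply: eq_bigr => j _; rewrite sym.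
  rewrite /A /B mulr_sumr -big_split -sumrB /=; apply: eq_bigr => i _.
  rewrite mulr_sumr -big_split -sumrB /=; apply: eq_bigr => j _; ring.
rewrite e1 e2; ring.
Qed.

Lemma SM (R : realFieldType) (n : nat) (Q : 'M[R]_n) (e : 'rV[R]_n) (c : R) :
  Q^T = Q -> Q \in unitmx -> (forall u : 'rV_n, 0 <= (u *m Q *m u^T) 0 0) -> 0 < c ->
  \tr (invmx (Q + c *: (e^T *m e))) <= \tr (invmx Q).
Proof.
move=> Qsym Qu Qpsd c0.
set x := e *m invmx Q.
have xQ : x *m Q = e by rewrite /x mulmxKV.
have Qxt : Q *m x^T = e^T by rewrite -{1}Qsym -trmx_mul xQ.
set s := (x *m e^T) 0 0.
have s0 : 0 <= s by rewrite /s -Qxt mulmxA.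
have exs : e *m x^T = s%:M.
  by rewrite -[e *m x^T]trmxK trmx_mul trmxK {1}(mx11_scalar (x *m e^T)) tr_scalar_mx.
have cs0 : 1 + c * s != 0 by apply: lt0r_neq0; rewrite ltr_pwDl // mulr_ge0 // ltW.
set k := c / (1 + c * s).
have k0 : 0 <= k by rewrite /k divr_ge0 // ?ltW // ltr_pwDl // mulr_ge0 // ltW.
set M := invmx Q - k *: (x^T *m x).
have QM : (Q + c *: (e^T *m e)) *m M = 1%:M.
  rewrite /M mulmxDl !mulmxBr mulmxV // -!scalemxAr mulmxA Qxt -!scalemxAl.
  have E1 : e^T *m e *m invmx Q = e^T *m x by rewrite -mulmxA.
  have E2 : e^T *m e *m (x^T *m x) = s *: (e^T *m x).
    by rewrite -mulmxA (mulmxA e) exs mul_scalar_mx -scalemxAr.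
  rewrite E1 E2.
  have kE : k * (1 + c * s) = c by rewrite /k divfK.
  have z : c - k - k * c * s = 0.
    by rewrite -{1}kE; ring.
  move: (e^T *m x) => P.
  apply/matrixP => i j; rewrite !mxE.
  apply/eqP; rewrite -subr_eq0; apply/eqP.
  transitivity ((c - k - k * c * s) * P i j); first ring.
  by rewrite z mul0r.
have [Qu' _] := mulmx1_unit QM.
have -> : invmx (Q + c *: (e^T *m e)) = M.
  by rewrite -[LHS]mul1mx -(mulmx1C QM) -mulmxA mulmxV // mulmx1.
rewrite /M mxtraceD raddfN /= mxtraceZ mxtrace_mulC trace_mx11 gerDl oppr_le0.
have yy : forall y : 'rV[R]_n, 0 <= (y *m y^T) 0 0.
  by move=> y; rewrite mxE sumr_ge0 // => i _; rewrite mxE -expr2 sqr_ge0.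
by rewrite mulr_ge0.
Qed.

Lemma Q_psd (R : realFieldType) (n : nat) (adj : rel 'I_n) (kappa : 'I_n -> R) S :
  symmetric adj -> irreflexive adj -> (forall i, 0 < kappa i) ->
  forall u : 'rV_n, 0 <= (u *m Qmx adj kappa S *m u^T) 0 0.
Proof.
move=> sym irr kp u; have := qf_Q kappa S u sym irr.
have X0 : 0 <= \sum_i \sum_j (adj i j)%:R * (u 0 i - u 0 j) ^+ 2 :> R.
  by rewrite sumr_ge0 // => i _; rewrite sumr_ge0 // => j _; rewrite mulr_ge0 ?ler0n ?sqr_ge0.
have Y0 : 0 <= \sum_i (i \in S)%:R * kappa i * u 0 i ^+ 2 :> R.
  by rewrite sumr_ge0 // => i _; rewrite mulr_ge0 ?sqr_ge0 // mulr_ge0 ?ler0n ?(ltW (kp i)).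
move: X0 Y0; set X := \sum_i _; set Y := \sum_i _; set q := (_ 0 0). lra. Qed.

Lemma path_const (R : realFieldType) (n : nat) (adj : rel 'I_n) (f : 'I_n -> R) x y :
  (forall i j, adj i j -> f i = f j) -> connect adj x y -> f x = f y.
Proof.
move=> h /connectP [p]; elim: p x => [|z p IH] x /=; first by move=> _ ->.
by case/andP => axz pz ey; rewrite (h _ _ axz); exact: IH pz ey.
Qed.

Lemma Q_unit (R : realFieldType) (n : nat) (adj : rel 'I_n) (kappa : 'I_n -> R) S :
  symmetric adj -> irreflexive adj -> connected_graph adj -> (forall i, 0 < kappa i) ->
  S != set0 -> Qmx adj kappa S \in unitmx.
Proof.
move=> sym irr conn kp Sne.
rewrite unitmxE unitfE; apply/negP => /det0P [v vn0 vQ].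
have := qf_Q kappa S v sym irr.
rewrite vQ mul0mx mxE mulr0.
have X0 : forall i, true -> 0 <= \sum_j (adj i j)%:R * (v 0 i - v 0 j) ^+ 2 :> R.
  by move=> i _; rewrite sumr_ge0 // => j _; rewrite mulr_ge0 ?ler0n ?sqr_ge0.
have Y0 : forall i, true -> 0 <= (i \in S)%:R * kappa i * v 0 i ^+ 2 :> R.
  by move=> i _; rewrite mulr_ge0 ?sqr_ge0 // mulr_ge0 ?ler0n ?(ltW (kp i)).
set X := \sum_i _; set Y := \sum_i _ => E.
have sX0 : 0 <= X by rewrite /X sumr_ge0 // => i _; exact: X0.
have sY0 : 0 <= Y by rewrite /Y sumr_ge0 // => i _; exact: Y0.
have XE : X = 0 by lra.
have YE : Y = 0 by lra.
have Xi : forall i, true -> _ := fun i => psumr_eq0P X0 XE (i:=i).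
have Yi := psumr_eq0P Y0 YE.
have edge : forall i j, adj i j -> v 0 i = v 0 j.
  move=> i j aij.
  have Xij : forall j, true -> 0 <= (adj i j)%:R * (v 0 i - v 0 j) ^+ 2 :> R.
    by move=> k _; rewrite mulr_ge0 ?ler0n ?sqr_ge0.
  have := psumr_eq0P Xij (Xi i isT) (i:=j) isT.
  rewrite aij mul1r => /eqP; rewrite sqrf_eq0 subr_eq0 => /eqP //.
have inS : forall i, i \in S -> v 0 i = 0.
  move=> i iS; have := Yi i isT; rewrite iS mul1r => /eqP.
  by rewrite mulf_eq0 (gt_eqF (kp i)) /= sqrf_eq0 => /eqP.
case/set0Pn: Sne => s sS.
apply/negP: vn0; apply/negPn/eqP/rowP => i; rewrite mxE.
by rewrite -(path_const (f := fun k => v 0 k) edge (conn s i)) inS.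
Qed.

Lemma Q_sym (R : realFieldType) (n : nat) (adj : rel 'I_n) (kappa : 'I_n -> R) S :
  symmetric adj -> irreflexive adj -> (Qmx adj kappa S)^T = Qmx adj kappa S.
Proof.
move=> sym irr; apply/matrixP => i j; rewrite mxE !Qmx_entry // sym.
by case: (eqVneq i j) => [->|ne] //; rewrite !mul0r.
Qed.

Lemma Qmx_add (R : realFieldType) (n : nat) (adj : rel 'I_n) (kappa : 'I_n -> R) (S : {set 'I_n}) (t : 'I_n) :
  irreflexive adj -> t \notin S ->
  Qmx adj kappa (t |: S) = Qmx adj kappa S + kappa t *: ((delta_mx 0 t : 'rV[R]_n)^T *m delta_mx 0 t).
Proof.
move=> irr tS; rewrite trmx_delta mul_delta_mx.
apply/matrixP => i j; rewrite [RHS]mxE !Qmx_entry // !mxE in_setU1.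
case: (eqVneq i j) => [<-|ne]; last first.
  have -> : (i == t) && (j == t) = false.
    by apply/negbTE/negP => /andP [/eqP it /eqP jt]; rewrite it jt eqxx in ne.
  by rewrite !mul0r mulr0 addr0.
case: (eqVneq i t) => [->|nt] /=; last by rewrite mulr0 addr0.
rewrite (negbTE tS) !mul1r mulr1 mul0r addr0; ring.
Qed.

Lemma inv_psd (R : realFieldType) (n : nat) (Q : 'M[R]_n) (e : 'rV[R]_n) :
  Q^T = Q -> Q \in unitmx -> (forall u : 'rV_n, 0 <= (u *m Q *m u^T) 0 0) ->
  0 <= (e *m invmx Q *m e^T) 0 0.
Proof.
move=> Qsym Qu Qpsd.
have := Qpsd (e *m invmx Q); rewrite mulmxKV // trmx_mul trmx_inv Qsym mulmxA //.
Qed.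

Lemma tr_inv_ge0 (R : realFieldType) (n : nat) (Q : 'M[R]_n) :
  Q^T = Q -> Q \in unitmx -> (forall u : 'rV_n, 0 <= (u *m Q *m u^T) 0 0) ->
  0 <= \tr (invmx Q).
Proof.
move=> Qsym Qu Qpsd; rewrite /mxtrace sumr_ge0 // => i _.
have := inv_psd (delta_mx 0 i) Qsym Qu Qpsd.
by rewrite -rowE trmx_delta -colE !mxE.
Qed.

Lemma mono (R : realFieldType) (n : nat) (adj : rel 'I_n) (kappa : 'I_n -> R) :
  symmetric adj -> irreflexive adj -> connected_graph adj -> (forall i, 0 < kappa i) ->
  forall k (S T : {set 'I_n}), #|T :\: S| = k -> S \subset T -> S != set0 ->
  \tr (invmx (Qmx adj kappa T)) <= \tr (invmx (Qmx adj kappa S)).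
Proof.
move=> sym irr conn kp; elim=> [|k IH] S T cT sST Sne.
  have -> : T = S.
    apply/eqP; rewrite eqEsubset sST andbT.
    by rewrite -setD_eq0 -cards_eq0 cT.
  by [].
have : (0 < #|T :\: S|)%N by rewrite cT.
rewrite card_gt0 => /set0Pn [t]; rewrite inE => /andP [tS tT].
set T' := T :\ t.
have sST' : S \subset T'.
  apply/subsetP => x xS; rewrite !inE (subsetP sST) // andbT.
  by apply/eqP => xt; rewrite -xt xS in tS.
have cT' : #|T' :\: S| = k.
  have e : T' :\: S = (T :\: S) :\ t by apply/setP => x; rewrite !inE andbCA.
  by move: (cardsD1 t (T :\: S)); rewrite cT inE tS tT /= add1n e => [[]].
have T'ne : T' != set0.
  case/set0Pn: Sne => s sS; apply/set0Pn; exists s; exact: (subsetP sST').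
have -> : T = t |: T' by rewrite setD1K.
rewrite Qmx_add //; last by rewrite !inE eqxx.
apply: le_trans (IH S T' cT' sST' Sne).
apply: SM => //.
- exact: Q_sym.
- exact: Q_unit.
- exact: Q_psd.
Qed.

Lemma bigmax_ge (R : realFieldType) (I : eqType) (r : seq I) (F : I -> R) (x0 : R) :
  x0 <= \big[@maxR R/x0]_(i <- r) F i /\
  forall v, v \in r -> F v <= \big[@maxR R/x0]_(i <- r) F i.
Proof.
elim: r => [|a r [IH1 IH2]]; first by rewrite big_nil.
rewrite big_cons /maxR; split.
  by rewrite le_max IH1 orbT.
move=> v; rewrite in_cons => /orP [/eqP ->|vr]; first by rewrite le_max lexx.
by rewrite le_max IH2 ?orbT.
Qed.

Theorem proposition1 (R : realFieldType) (n : nat) (hn : (0 < n)%N)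
    (adj : rel 'I_n) (kappa : 'I_n -> R) :
  simple_graph adj ->
  connected_graph adj ->
  (forall i, 0 < kappa i) ->
  forall S1 S2 : {set 'I_n}, S1 \subset S2 ->
    fset_fun adj kappa (Ordinal hn) S1 <= fset_fun adj kappa (Ordinal hn) S2.
Proof.
move=> [sym irr] conn kp S1 S2 sub.
have mon := mono sym irr conn kp.
have trge0 : forall S : {set 'I_n}, S != set0 -> 0 <= \tr (invmx (Qmx adj kappa S)).
  move=> S Sne; apply: tr_inv_ge0; [exact: Q_sym | exact: Q_unit | exact: Q_psd].
have [M0 Mge] := bigmax_ge (index_enum 'I_n) (fun v => \tr (invmx (Qmx adj kappa [set v])))
   (\tr (invmx (Qmx adj kappa [set Ordinal hn]))).
have s1ne : forall v : 'I_n, [set v] != set0 by move=> v; apply/set0Pn; exists v; rewrite inE.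
rewrite /fset_fun -/(max_trinv adj kappa (Ordinal hn)) in M0 Mge *.
set M := max_trinv adj kappa (Ordinal hn) in M0 Mge *.
have M0' : 0 <= M := le_trans (trge0 _ (s1ne _)) M0.
case: (eqVneq S1 set0) => [_|S1ne].
  case: (eqVneq S2 set0) => [_|S2ne]; first by [].
  case/set0Pn: (S2ne) => v vS2.
  have s1 : [set v] \subset S2 by rewrite sub1set.
  have h2 := mon _ [set v] S2 erefl s1 (s1ne v).
  have h3 : \tr (invmx (Qmx adj kappa [set v])) <= M by apply: Mge; rewrite mem_index_enum.
  lra.
have S2ne : S2 != set0.
  by apply: contraNneq S1ne => e; rewrite -subset0 -e.
rewrite (negbTE S2ne); have := mon _ S1 S2 erefl sub S1ne; lra.
Qed.
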